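(* Let $n$ be odd and $\alpha>0$ with $\alpha\,bin(n,\tfrac12,i)\le1$ for all $i$. Let $P_e$ be the distribution on $\{0,1\}^{n+1}$ (coordinates indexed by $i\in\{0,\ldots,n\}$) in which coordinate $i$ is independently $1$ with probability $S_e(i)$ and $0$ otherwise. Then $\sum_{u\in\{0,1\}^{n+1}}\sqrt{P_e(u)}\le e^{\sqrt\alpha\,(2\pi n)^{1/4}}$. The same bound holds for the analogous distribution $P_o$ induced by $S_o$.
   Context: $bin(n,p,k)=\binom nk p^k(1-p)^{n-k}$. $S_e(i)=\alpha\,bin(n,\tfrac12,i)$ for even $i$ and $0$ for odd $i$; $S_o(i)=\alpha\,bin(n,\tfrac12,i)$ for odd $i$ and $0$ for even $i$, for $i\in\{0,\ldots,n\}$. *)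

(* Defs.v *)
From HB Require Import structures.
From mathcomp Require Import all_boot all_order all_algebra.
From mathcomp Require Import all_classical all_reals all_analysis.
Set Implicit Arguments. Unset Strict Implicit. Unset Printing Implicit Defensive.
Import Order.TTheory GRing.Theory Num.Theory.
Local Open Scope ring_scope.

Definition bin {R : realType} (n : nat) (p : R) (k : nat) : R :=
  ('C(n, k))%:R * p ^+ k * (1 - p) ^+ (n - k).

Definition S_e {R : realType} (alpha : R) (n i : nat) : R :=
  if ~~ odd i then alpha * bin n (1 / 2) i else 0.

Definition S_o {R : realType} (alpha : R) (n i : nat) : R :=
  if odd i then alpha * bin n (1 / 2) i else 0.

Definition prodBern {R : realType} (n : nat) (S : nat -> R)
    (u : {ffun 'I_n.+1 -> bool}) : R :=
  \prod_(i < n.+1) (if u i then S i else 1 - S i).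
Arguments prodBern {R} n S u.

(* Main.v *)
Require Import Defs.
From HB Require Import structures.
From mathcomp Require Import all_boot all_order all_algebra.
From mathcomp Require Import all_classical all_reals all_analysis.
From mathcomp Require Import ring lra zify.
From Stdlib Require Import Lia.
Import Order.TTheory GRing.Theory Num.Theory.
Local Open Scope ring_scope.

Lemma cs_bound (R : realType) (I : finType) (P : pred I) (a w : I -> R) :
  (forall i, P i -> 0 <= a i) -> (forall i, P i -> 0 < w i) ->
  (\sum_(i | P i) a i) ^+ 2 <=
  (\sum_(i | P i) a i ^+ 2 / w i) * (\sum_(i | P i) w i).
Proof.
move=> ha hw.
set S := \sum_(i | P i) a i.
set A := \sum_(i | P i) a i ^+ 2 / w i.
set W := \sum_(i | P i) w i.
have key : forall t : R, 2 * t * S <= t ^+ 2 * A + W.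
  move=> t; rewrite /S /A /W mulr_sumr mulr_sumr -big_split /=.
  apply: ler_sum => i Pi.
  have wi := hw i Pi.
  have -> : t ^+ 2 * (a i ^+ 2 / w i) + w i = ((t * a i) ^+ 2 + w i ^+ 2) / w i.
    by field; rewrite gt_eqF.
  rewrite ler_pdivlMr //.
  have := sqr_ge0 (t * a i - w i); nra.
have S0 : 0 <= S by apply: sumr_ge0.
have W0 : 0 <= W by apply: sumr_ge0 => i Pi; exact: ltW (hw i Pi).
have A0 : 0 <= A.
  apply: sumr_ge0 => i Pi; apply: divr_ge0; [exact: sqr_ge0 | exact: ltW (hw i Pi)].
have [A00|Apos] := eqVneq A 0.
  have : S <= 0.
    rewrite leNgt; apply/negP => Spos.
    have := key ((W + 1) / (2 * S)).
    rewrite A00 expr2 !mulr0 add0r.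
    have -> : 2 * ((W + 1) / (2 * S)) * S = W + 1 by field; rewrite gt_eqF.
    lra.
  move=> Sle; have -> : S = 0 by apply/le_anti; rewrite Sle S0.
  by rewrite expr0n /= mulr_ge0.
have Ap : 0 < A by rewrite lt_def Apos A0.
have := key (S / A).
have -> : 2 * (S / A) * S = 2 * (S ^+ 2 / A) by field.
have -> : (S / A) ^+ 2 * A = S ^+ 2 / A by field.
move=> h.
have h2 : S ^+ 2 / A <= W by lra.
by rewrite -ler_pdivrMl // mulrC.
Qed.



Lemma sqrt_prod (R : realType) (I : Type) (r : seq I) (F : I -> R) :
  (forall i, 0 <= F i) -> Num.sqrt (\prod_(i <- r) F i) = \prod_(i <- r) Num.sqrt (F i).
Proof.
move=> hF; elim: r => [|x r IH]; first by rewrite !big_nil sqrtr1.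
by rewrite !big_cons sqrtrM // IH.
Qed.

Lemma prod_sqrt_sum (R : realType) n (S : nat -> R) :
  (forall i, (i <= n)%N -> 0 <= S i <= 1) ->
  \sum_(u : {ffun 'I_n.+1 -> bool}) Num.sqrt (prodBern n S u)
   <= expR (\sum_(i < n.+1) Num.sqrt (S i)).
Proof.
move=> hS.
have hS' : forall i : 'I_n.+1, 0 <= S i <= 1.
  move=> i; apply: hS; by rewrite -ltnS.
have -> : \sum_(u : {ffun 'I_n.+1 -> bool}) Num.sqrt (prodBern n S u) =
  \sum_(u : {ffun 'I_n.+1 -> bool}) \prod_(i < n.+1)
     (fun (i : 'I_n.+1) (b : bool) => Num.sqrt (if b then S i else 1 - S i)) i (u i).
  apply: eq_bigr => u _; rewrite /prodBern sqrt_prod //.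
  move=> i; have /andP[h0 h1] := hS' i; case: (u i) => //; lra.
rewrite -(bigA_distr_bigA (fun (i : 'I_n.+1) (b : bool) => Num.sqrt (if b then S i else 1 - S i))) /=.
rewrite expR_sum; apply: ler_prod => i _.
rewrite big_bool /=.
have /andP[h0 h1] := hS' i.
apply/andP; split; first by rewrite addr_ge0 // sqrtr_ge0.
apply: le_trans (expR_ge1Dx _); rewrite addrC lerD2r.
apply: (@le_trans _ _ (Num.sqrt 1)); [apply: ler_wsqrtr; lra | by rewrite sqrtr1].
Qed.



Lemma bern_ind (R : realType) (e : R) n : 0 <= e -> (1 + e) ^+ n * (1 - n%:R * e) <= 1.
Proof.
move=> e0; elim: n => [|n IH]; first by rewrite expr0 mul0r subr0 mulr1.
have X0 : 0 <= (1 + e) ^+ n by apply: exprn_ge0; lra.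
rewrite exprS -mulrA.
set X := (1 + e) ^+ n in X0 IH *.
rewrite -natr1 /=.
have h : (1 + e) * (X * (1 - (n%:R + 1) * e)) = X * (1 - n%:R * e) - X * ((n%:R + 1) * e ^+ 2).
  ring.
rewrite h.
have : 0 <= X * ((n%:R + 1) * e ^+ 2).
  apply: mulr_ge0 => //; apply: mulr_ge0; [|exact: sqr_ge0].
  by apply: addr_ge0; [exact: ler0n|].
lra.
Qed.

Lemma geom_odd (R : realType) (q : R) m :
  (1 - q ^+ 2) * \sum_(0 <= i < m.+1) q ^+ (2 * i + 1) = q - q ^+ (2 * m + 3).
Proof.
elim: m => [|m IH]; first by rewrite big_nat1 (_ : (2 * 0 + 1 = 1)%N) // (_ : (2 * 0 + 3 = 3)%N) // expr1; ring.
rewrite big_nat_recr //= mulrDr IH.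
have -> : (2 * m.+1 + 1 = 2 * m + 3)%N by lia.
have -> : (2 * m.+1 + 3 = (2 * m + 3) + 2)%N by lia.
rewrite [q ^+ (2 * m + 3 + 2)]exprD; ring.
Qed.

Definition dd (n i : nat) : nat := ((2 * i - n) + (n - 2 * i))%N.

Lemma W_all (R : realType) (q : R) m :
  \sum_(i < (2 * m + 1).+1) q ^+ dd (2 * m + 1) i =
  2 * \sum_(0 <= i < m.+1) q ^+ (2 * i + 1).
Proof.
rewrite -(big_mkord xpredT (fun i => q ^+ dd (2 * m + 1) i)).
rewrite (big_cat_nat (n := m.+1)) //=; last by lia.
rewrite big_nat_rev /= add0n.
have -> : m.+1 = (0 + m.+1)%N by [].
rewrite big_addn.
have -> : ((2 * m + 1).+1 - (0 + m.+1) = m.+1)%N by lia.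
rewrite add0n mulr2n mulrDl mul1r.
congr (_ + _); apply: eq_big_nat => i /andP[_ hi]; congr (_ ^+ _); rewrite /dd; lia.
Qed.

Lemma rd_le (R : realType) (q r : R) n i :
  0 <= q -> 0 <= r -> q * r = 1 -> (i <= n)%N ->
  r ^+ dd n i <= r ^+ i * q ^+ (n - i) + q ^+ i * r ^+ (n - i).
Proof.
move=> q0 r0 qr hi; rewrite /dd.
have [h|h] := leqP n (2 * i).
  have e1 : r ^+ i * q ^+ (n - i) = r ^+ (2 * i - n).
    have -> : r ^+ i = r ^+ (2 * i - n) * r ^+ (n - i) by rewrite -exprD; congr (_ ^+ _); lia.
    by rewrite -mulrA -exprMn (mulrC r) qr expr1n mulr1.
  have -> : (n - 2 * i = 0)%N by lia.
  rewrite addn0 e1 lerDl.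
  by apply: mulr_ge0; apply: exprn_ge0.
have e1 : q ^+ i * r ^+ (n - i) = r ^+ (n - 2 * i).
  have -> : r ^+ (n - i) = r ^+ (n - 2 * i) * r ^+ i by rewrite -exprD; congr (_ ^+ _); lia.
  by rewrite mulrA mulrC mulrA -exprMn (mulrC r) qr expr1n mul1r.
have -> : (2 * i - n = 0)%N by lia.
rewrite add0n e1 lerDr.
by apply: mulr_ge0; apply: exprn_ge0.
Qed.

Lemma T_sum (R : realType) (x y : R) n p : odd n ->
  \sum_(i < n.+1 | odd i == p)
     'C(n, i)%:R * (x ^+ i * y ^+ (n - i) + y ^+ i * x ^+ (n - i)) = (x + y) ^+ n.
Proof.
move=> hn.
set T := fun i : 'I_n.+1 => 'C(n, i)%:R * (x ^+ i * y ^+ (n - i) + y ^+ i * x ^+ (n - i)).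
have e2 : \sum_(i < n.+1 | ~~ (odd i == p)) T i = \sum_(i < n.+1 | odd i == ~~ p) T i.
  by apply: eq_bigl => i; case: (odd i); case: (p).
have hall : \sum_(i < n.+1) T i = 2 * (x + y) ^+ n.
  rewrite /T; under eq_bigr do rewrite mulrDr.
  rewrite big_split /= mulr2n mulrDl mul1r.
  rewrite [in X in _ = X + _]addrC [in X in _ = _ + X]exprDn exprDn.
  by congr (_ + _); apply: eq_bigr => i _; rewrite mulr_natl mulrC.
have hsym : \sum_(i < n.+1 | odd i == p) T i = \sum_(i < n.+1 | odd i == ~~ p) T i.
  rewrite (reindex_inj rev_ord_inj) /=; apply: eq_big => i.
    rewrite (_ : (n.+1 - i.+1 = n - i)%N) // oddB; last by rewrite -ltnS.
    by rewrite hn; case: (odd i); case: (p).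
  move=> _; rewrite /T /= (_ : (n.+1 - i.+1 = n - i)%N) // bin_sub; last by rewrite -ltnS.
  have -> : (n - (n - i) = i)%N by have := ltn_ord i; lia.
  ring.
rewrite (bigID (fun i : 'I_n.+1 => odd i == p)) /= in hall.
rewrite e2 -hsym in hall.
have : \sum_(i < n.+1 | odd i == p) T i = (x + y) ^+ n by lra.
by [].
Qed.




Lemma keyA (R : realType) (n : nat) (p : bool) (s : R) : odd n -> 1 <= s -> s ^+ 2 = n%:R ->
  \sum_(i < n.+1 | odd i == p)
     Num.sqrt (bin n (1 / 2) i) ^+ 2 / (s / (s + 1)) ^+ dd n i <= 2 * (s + 1) / (s + 2).
Proof.
move=> hn s1 s2.
set q := s / (s + 1). set r := (s + 1) / s.
have q0 : 0 < q by apply: divr_gt0; lra.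
have r0 : 0 < r by apply: divr_gt0; lra.
have qr : q * r = 1 by rewrite /q /r; field; apply/andP; split; rewrite gt_eqF //; lra.
apply: (le_trans (y := \sum_(i < n.+1 | odd i == p) 'C(n, i)%:R *
   ((r / 2) ^+ i * (q / 2) ^+ (n - i) + (q / 2) ^+ i * (r / 2) ^+ (n - i)))).
  apply: ler_sum => i _.
  have hi : (i <= n)%N by rewrite -ltnS.
  have h2 : (1 / 2 : R) ^+ i * (1 / 2) ^+ (n - i) = (1 / 2) ^+ n by rewrite -exprD subnKC.
  have hb : 0 <= bin n (1 / 2 : R) i.
    rewrite /bin; apply: mulr_ge0; [apply: mulr_ge0|]; [exact: ler0n| |]; apply: exprn_ge0; lra.
  rewrite sqr_sqrtr // /bin (_ : 1 - 1 / 2 = 1 / 2 :> R); last by field.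
  have -> : (r / 2) ^+ i * (q / 2) ^+ (n - i) + (q / 2) ^+ i * (r / 2) ^+ (n - i) =
     (r ^+ i * q ^+ (n - i) + q ^+ i * r ^+ (n - i)) * (1 / 2) ^+ n.
    rewrite -h2 !exprMn !expr1n !mul1r.
    move: ((s + 1) ^+ i) (s^-1 ^+ i) (2^-1 ^+ i) (s ^+ (n - i)) ((s + 1)^-1 ^+ (n - i)) (2^-1 ^+ (n - i)) (s ^+ i) ((s + 1)^-1 ^+ i) ((s + 1) ^+ (n - i)) (s^-1 ^+ (n - i)) => ? ? ? ? ? ? ? ? ? ?.
    ring.
  have qd : q ^+ dd n i * r ^+ dd n i = 1 by rewrite -exprMn qr expr1n.
  have -> : 'C(n, i)%:R * (1 / 2) ^+ i * (1 / 2) ^+ (n - i) / q ^+ dd n i =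
     'C(n, i)%:R * (1 / 2) ^+ n * r ^+ dd n i.
    have Qn : q ^+ dd n i != 0 by apply: lt0r_neq0; apply: exprn_gt0.
    have -> : r ^+ dd n i = (q ^+ dd n i)^-1.
      by apply: (mulfI Qn); rewrite qd divff.
    by rewrite -(mulrA ('C(n, i)%:R)) h2.
  rewrite -mulrA; apply: ler_wpM2l; first exact: ler0n.
  rewrite [X in _ <= X]mulrC; apply: ler_wpM2l; first by apply: exprn_ge0; lra.
  apply: rd_le => //; exact: ltW.
rewrite T_sum //.
have -> : r / 2 + q / 2 = 1 + 1 / (2 * s * (s + 1)).
  rewrite /q /r; field; apply/andP; split; rewrite gt_eqF //; lra.
set e := 1 / (2 * s * (s + 1)).
have e0 : 0 <= e by rewrite /e; apply: divr_ge0; [lra|]; apply: mulr_ge0; lra.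
have := @bern_ind R e n e0.
have -> : 1 - n%:R * e = (s + 2) / (2 * (s + 1)).
  rewrite -s2 /e; field; apply/andP; split; rewrite gt_eqF //; lra.
move=> h.
have hp : 0 < (s + 2) / (2 * (s + 1)) by apply: divr_gt0; lra.
rewrite -(ler_pM2r hp); apply: (le_trans h).
rewrite (_ : 2 * (s + 1) / (s + 2) * ((s + 2) / (2 * (s + 1))) = 1) //.
field; apply/andP; split; rewrite gt_eqF //; lra.
Qed.

Lemma keyW (R : realType) (n : nat) (p : bool) (s : R) : odd n -> 1 <= s ->
  \sum_(i < n.+1 | odd i == p) (s / (s + 1)) ^+ dd n i <= 2 * s * (s + 1) / (2 * s + 1).
Proof.
move=> hn s1.
set q := s / (s + 1).
have q0 : 0 < q by apply: divr_gt0; lra.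
apply: (le_trans (y := \sum_(i < n.+1) q ^+ dd n i)).
  rewrite [X in _ <= X](bigID (fun i : 'I_n.+1 => odd i == p)) /= lerDl.
  by apply: sumr_ge0 => i _; apply: exprn_ge0; exact: ltW.
have hn2 : n = (2 * n./2 + 1)%N.
  by rewrite -{1}(odd_double_half n) hn -mul2n addnC.
rewrite hn2 W_all.
set G := \sum_(0 <= i < (n./2).+1) q ^+ (2 * i + 1).
have hG := @geom_odd R q n./2; rewrite -/G in hG.
have hq3 : 0 <= q ^+ (2 * n./2 + 3) by apply: exprn_ge0; exact: ltW.
have hq2 : 1 - q ^+ 2 = (2 * s + 1) / (s + 1) ^+ 2.
  rewrite /q; field; rewrite gt_eqF //; lra.
have hpos : 0 < (2 * s + 1) / (s + 1) ^+ 2.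
  by apply: divr_gt0; [lra| apply: exprn_gt0; lra].
rewrite hq2 in hG.
have hG2 : (2 * s + 1) / (s + 1) ^+ 2 * G <= q by lra.
have : G <= q / ((2 * s + 1) / (s + 1) ^+ 2) by rewrite ler_pdivlMr // mulrC.
have -> : q / ((2 * s + 1) / (s + 1) ^+ 2) = s * (s + 1) / (2 * s + 1).
  rewrite /q; field; apply/andP; split; rewrite gt_eqF //; lra.
move=> h.
have -> : 2 * s * (s + 1) / (2 * s + 1) = 2 * (s * (s + 1) / (2 * s + 1)) by rewrite !mulrA.
lra.
Qed.

Lemma powR_quarter (R : realType) (S x : R) : 0 <= S -> S ^+ 4 <= x ->
  S <= powR x (1 / 4).
Proof.
move=> S0 hx.
have -> : S = powR (S ^+ 4) (1 / 4).
  rewrite -powR_mulrn // -powRrM (_ : 4%:R * (1 / 4) = 1 :> R); last by field.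
  by rewrite powRr1.
apply: ge0_ler_powR => //.
  by rewrite nnegrE; apply: exprn_ge0.
by rewrite nnegrE; apply: le_trans hx; apply: exprn_ge0.
Qed.

Lemma key (R : realType) (n : nat) (p : bool) : odd n ->
  \sum_(i < n.+1 | odd i == p) Num.sqrt (bin n (1 / 2 : R) i) <= powR (2 * pi * n%:R) (1 / 4).
Proof.
move=> hn.
have n1 : (1 <= n)%N by case: n hn.
set s := Num.sqrt (n%:R : R).
have s2 : s ^+ 2 = n%:R by rewrite sqr_sqrtr // ler0n.
have s1 : 1 <= s.
  rewrite -sqrtr1; apply: ler_wsqrtr; by rewrite ler1n.
have CS := @cs_bound R _ (fun i : 'I_n.+1 => odd i == p)
  (fun i : 'I_n.+1 => Num.sqrt (bin n (1 / 2 : R) i))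
  (fun i : 'I_n.+1 => (s / (s + 1)) ^+ dd n i)
  (fun i _ => sqrtr_ge0 _) (fun i _ => exprn_gt0 _ (divr_gt0 (lt_le_trans ltr01 s1) (ltr_pwDr ltr01 (le_trans ler01 s1)))).
simpl in CS.
have hA := @keyA R n p s hn s1 s2.
have hW := @keyW R n p s hn s1.
set S := \sum_(i < n.+1 | odd i == p) Num.sqrt (bin n (1 / 2 : R) i) in CS *.
set A := \sum_(i < n.+1 | odd i == p) _ ^+ 2 / _ in CS hA.
set W := \sum_(i < n.+1 | odd i == p) _ in CS hW.
have S0 : 0 <= S by apply: sumr_ge0 => i _; exact: sqrtr_ge0.
have A0 : 0 <= A.
  apply: sumr_ge0 => i _; apply: divr_ge0; [exact: sqr_ge0| apply: exprn_ge0].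
  apply: divr_ge0; lra.
have W0 : 0 <= W by apply: sumr_ge0 => i _; apply: exprn_ge0; apply: divr_ge0; lra.
have hAW : A * W <= 2 * (s + 1) / (s + 2) * (2 * s * (s + 1) / (2 * s + 1)).
  by apply: ler_pM.
have hB : 2 * (s + 1) / (s + 2) * (2 * s * (s + 1) / (2 * s + 1)) <= 2 * s.
  rewrite -subr_ge0.
  have -> : 2 * s - 2 * (s + 1) / (s + 2) * (2 * s * (s + 1) / (2 * s + 1)) =
     2 * s * s / ((s + 2) * (2 * s + 1)).
    field; apply/andP; split; rewrite gt_eqF //; lra.
  apply: divr_ge0; [|apply: mulr_ge0]; nra.
have hS2 : S ^+ 2 <= 2 * s by lra.
apply: powR_quarter => //.
have -> : S ^+ 4 = (S ^+ 2) ^+ 2 by rewrite -exprM.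
apply: (le_trans (y := (2 * s) ^+ 2)).
  have hS20 : 0 <= S ^+ 2 by exact: sqr_ge0.
  rewrite !expr2 in hS2 hS20 *; nra.
rewrite exprMn s2.
have := pi_ge2 R.
have : 0 <= (n%:R : R) by exact: ler0n.
nra.
Qed.




Lemma bin_ge0 (R : realType) n i : 0 <= bin n (1 / 2 : R) i.
Proof.
rewrite /bin; apply: mulr_ge0; [apply: mulr_ge0|]; [exact: ler0n| |]; apply: exprn_ge0; lra.
Qed.

Lemma one_side (R : realType) (n : nat) (alpha : R) (p : bool)
  (hn : odd n) (halpha : 0 < alpha)
  (hbound : forall i : nat, (i <= n)%N -> alpha * bin n (1 / 2) i <= 1)
  (S : nat -> R) (hSdef : forall i, S i = if odd i == p then alpha * bin n (1 / 2) i else 0) :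
  \sum_(u : {ffun 'I_n.+1 -> bool}) Num.sqrt (prodBern n S u)
     <= expR (Num.sqrt alpha * powR (2 * pi * n%:R) (1 / 4)).
Proof.
have hS : forall i, (i <= n)%N -> 0 <= S i <= 1.
  move=> i hi; rewrite hSdef; case: (odd i == p); last by rewrite lexx ler01.
  rewrite hbound // andbT; apply: mulr_ge0; [exact: ltW | exact: bin_ge0].
apply: le_trans (@prod_sqrt_sum R n S hS) _.
  rewrite ler_expR.
  have -> : \sum_(i < n.+1) Num.sqrt (S i) =
     Num.sqrt alpha * \sum_(i < n.+1 | odd i == p) Num.sqrt (bin n (1 / 2 : R) i).
    rewrite mulr_sumr [in RHS]big_mkcond /=; apply: eq_bigr => i _.
    rewrite hSdef; case: (odd i == p); first by rewrite sqrtrM // ltW.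
    by rewrite sqrtr0.
  by apply: ler_wpM2l; [exact: sqrtr_ge0 | exact: key].
Qed.

Theorem lemma4 (R : realType) (n : nat) (alpha : R)
  (hn : odd n) (halpha : 0 < alpha)
  (hbound : forall i : nat, (i <= n)%N -> alpha * bin n (1 / 2) i <= 1) :
  (\sum_(u : {ffun 'I_n.+1 -> bool}) Num.sqrt (prodBern n (S_e alpha n) u)
     <= expR (Num.sqrt alpha * powR (2 * pi * n%:R) (1 / 4)))
  /\
  (\sum_(u : {ffun 'I_n.+1 -> bool}) Num.sqrt (prodBern n (S_o alpha n) u)
     <= expR (Num.sqrt alpha * powR (2 * pi * n%:R) (1 / 4))).
Proof.
split.
  apply: (@one_side R n alpha false) => // i.
  by rewrite /S_e; case: (odd i).
apply: (@one_side R n alpha true) => // i.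
by rewrite /S_o; case: (odd i).
Qed.
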